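(* Let $d\geq 2$, energies $E_1\leq\dots\leq E_d$, inverse temperatures $\alpha>\beta\geq 0$, and $\gamma_k=e^{-\alpha E_k}/\sum_i e^{-\alpha E_i}$, $\Gamma_k=e^{-\beta E_k}/\sum_i e^{-\beta E_i}$. Define $$\tilde{\gamma}_1=\frac{\Gamma_1(\gamma_1-\gamma_d)}{\Gamma_1(1-\gamma_d)-\Gamma_d(1-\gamma_1)},\qquad \tilde{\Gamma}_d=\frac{\Gamma_d(\gamma_1-\gamma_d)}{\Gamma_1(1-\gamma_d)-\Gamma_d(1-\gamma_1)}.$$ For $d$-dimensional probability distributions $\mathbf{p}$ and $\mathbf{q}$ satisfying $\Gamma_d\leq p_d\leq\tilde{\Gamma}_d$ and $\gamma_1\leq q_1\leq\tilde{\gamma}_1$, there exist probability distributions $\mathbf{p}',\mathbf{p}'',\mathbf{q}',\mathbf{q}''$ such that $$\mathbf{p}\succ_{\boldsymbol{\gamma}}\mathbf{p}'\succ_{\boldsymbol{\Gamma}}\mathbf{p}'',\qquad \mathbf{q}\succ_{\boldsymbol{\Gamma}}\mathbf{q}'\succ_{\boldsymbol{\gamma}}\mathbf{q}'',$$ and $$p_d''=\frac{(1-\gamma_1)\Gamma_d}{(1-\gamma_d)\Gamma_1}p_d+\frac{(\gamma_1-\gamma_d)\Gamma_d}{(1-\gamma_d)\Gamma_1},\qquad q_1''=\frac{(1-\gamma_1)\Gamma_d}{(1-\gamma_d)\Gamma_1}q_1+\frac{\gamma_1-\gamma_d}{1-\gamma_d},$$ so that $p_d\leq p_d''\leq\tilde{\Gamma}_d$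 and $q_1\leq q_1''\leq\tilde{\gamma}_1$.
   Context: For a full-support probability vector $\mathbf{g}$, $\mathbf{p}\succ_{\mathbf{g}}\mathbf{q}$ (thermomajorisation) means: ordering indices by a permutation $\pi$ with $p_{\pi_i}/g_{\pi_i}$ non-increasing in $i$, the piecewise linear curve through the points $\left(\sum_{i\leq j}g_{\pi_i},\sum_{i\leq j}p_{\pi_i}\right)$, $j=0,\dots,d$, is nowhere below the analogous curve of $\mathbf{q}$. *)

(* Defs.v *)
From HB Require Import structures.
From mathcomp Require Import all_boot all_order all_algebra fingroup perm.
From mathcomp Require Import all_classical all_reals.
From mathcomp Require Import sequences exp.
Set Implicit Arguments. Unset Strict Implicit. Unset Printing Implicit Defensive.
Import Order.TTheory GRing.Theory Num.Theory.
Local Open Scope ring_scope.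

Section Thermo.
Variables (R : realType) (d : nat).

Definition gibbs (b : R) (E : 'I_d -> R) : 'I_d -> R :=
  fun k => expR (- (b * E k)) / \sum_(i < d) expR (- (b * E i)).

Definition prob_dist (p : 'I_d -> R) : Prop :=
  (forall i, 0 <= p i) /\ \sum_(i < d) p i = 1.

Definition gorder (g p : 'I_d -> R) (pi : 'S_d) : Prop :=
  forall i j : 'I_d, (i <= j)%N -> p (pi j) / g (pi j) <= p (pi i) / g (pi i).

Definition xpt (g : 'I_d -> R) (pi : 'S_d) (k : nat) : R :=
  \sum_(i < d | (i < k)%N) g (pi i).

(* The piecewise linear curve through the points
   (sum_(i<=j) g_(pi i), sum_(i<=j) p_(pi i)), j = 0..d, evaluated at x in
   [0,1]: the i-th segment has horizontal extent g_(pi i) starting at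
   xpt g pi i and slope p_(pi i)/g_(pi i); the value at x is the sum of the
   contributions of the part of each segment lying to the left of x. *)
Definition curve (g p : 'I_d -> R) (pi : 'S_d) (x : R) : R :=
  \sum_(i < d) p (pi i) / g (pi i) *
     Num.min (Num.max (x - xpt g pi i) 0) (g (pi i)).

(* Thermomajorisation p >_g q : the thermomajorisation curve of p is nowhere
   below that of q (for any admissible orderings pi, sigma; the curves do
   not depend on that choice). *)
Definition thermomaj (g p q : 'I_d -> R) : Prop :=
  forall pi sigma : 'S_d, gorder g p pi -> gorder g q sigma ->
    forall x : R, 0 <= x <= 1 -> curve g q sigma x <= curve g p pi x.

End Thermo.

(* Main.v *)
Require Import Defs.
From HB Require Import structures.
From mathcomp Require Import all_boot all_order all_algebra fingroup perm.
From mathcomp Require Import all_classical all_reals.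
From mathcomp Require Import sequences exp.
From mathcomp Require Import ring lra.
Import Order.TTheory GRing.Theory Num.Theory.
Local Open Scope ring_scope.

Section Core.
Context {R : realType} {n : nat}.
Implicit Types (g p q t : 'I_n.+1 -> R) (pi : 'S_n.+1).

Lemma sum_ltS {k} (hk : (k < n.+1)%N) (F : 'I_n.+1 -> R) :
  \sum_(i < n.+1 | (i < k.+1)%N) F i = \sum_(i < n.+1 | (i < k)%N) F i + F (Ordinal hk).
Proof.
rewrite (bigD1 (Ordinal hk)) /= ?ltnSn // addrC; congr (_ + _).
apply: eq_bigl => i; rewrite ltnS ltn_neqAle andbC; congr (_ && _).
Qed.

Lemma sum_lt0 (F : 'I_n.+1 -> R) : \sum_(i < n.+1 | (i < 0)%N) F i = 0.
Proof. by rewrite big_pred0 // => i; rewrite ltn0. Qed.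

Lemma sum_ltd (F : 'I_n.+1 -> R) : \sum_(i < n.+1 | (i < n.+1)%N) F i = \sum_i F i.
Proof. by apply: eq_bigl => i; rewrite ltn_ord. Qed.

Lemma sum_perm pi (F : 'I_n.+1 -> R) : \sum_i F (pi i) = \sum_i F i.
Proof. by rewrite [RHS](reindex_inj (@perm_inj _ pi)). Qed.

Lemma u_tel (x X a : R) : 0 <= a ->
  Num.min (Num.max (x - X) 0) a = Num.min x (X + a) - Num.min x X.
Proof.
move=> ha.
case: (lerP x X) => h1.
  rewrite (max_r (_ : x - X <= 0)); last lra.
  rewrite (min_l ha) (min_l (_ : x <= X + a)); lra.
rewrite (max_l (_ : 0 <= x - X)); last lra.
case: (lerP x (X + a)) => h2.
  by rewrite (min_l (_ : x - X <= a)); lra.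
by rewrite (min_r (_ : a <= x - X)); lra.
Qed.

Lemma xpt0 g pi : xpt g pi 0 = 0.
Proof. exact: sum_lt0. Qed.

Lemma xptS g pi {k} (hk : (k < n.+1)%N) : xpt g pi k.+1 = xpt g pi k + g (pi (Ordinal hk)).
Proof. by rewrite /xpt sum_ltS. Qed.

Lemma xptd g pi : xpt g pi n.+1 = \sum_i g i.
Proof. by rewrite /xpt sum_ltd (sum_perm pi g). Qed.

Lemma sumU g pi x k : (forall i, 0 <= g i) -> 0 <= x -> (k <= n.+1)%N ->
  \sum_(i < n.+1 | (i < k)%N) Num.min (Num.max (x - xpt g pi i) 0) (g (pi i))
  = Num.min x (xpt g pi k).
Proof.
move=> hg hx; elim: k => [|k IH] hk.
  by rewrite sum_lt0 xpt0 min_r.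
rewrite (sum_ltS hk) IH ?(ltnW hk) // (xptS _ _ hk) /= u_tel //; lra.
Qed.

Lemma curve_rep g q sigma x : (forall i, 0 < g i) -> \sum_i g i = 1 -> 0 <= x <= 1 ->
  exists t, (forall i, 0 <= t i <= 1) /\ \sum_i t i * g i = x /\
            curve g q sigma x = \sum_i t i * q i.
Proof.
move=> hg hs /andP[hx0 hx1].
have hg0 i : 0 <= g i by apply/ltW.
pose u (k : 'I_n.+1) := Num.min (Num.max (x - xpt g sigma k) 0) (g (sigma k)).
have hu k : 0 <= u k <= g (sigma k).
  by rewrite /u le_min ge_min le_max lexx hg0 lexx !orbT.
exists (fun i => u ((sigma^-1)%g i) / g i); split; [|split].
- move=> i; have := hu ((sigma^-1)%g i); rewrite permKV => /andP[h1 h2].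
  by rewrite divr_ge0 //= ler_pdivrMr // mul1r.
- rewrite -(sum_perm sigma).
  under eq_bigr => i _ do rewrite permK divfK ?gt_eqF //.
  by rewrite -sum_ltd sumU // xptd hs min_l.
- rewrite /curve; rewrite [RHS]/= -(sum_perm sigma (fun i => _ / g i * q i)); apply: eq_bigr => i _; rewrite permK /u.
  by rewrite mulrC mulrA mulrAC.
Qed.

Lemma greedy g p pi x t : (forall i, 0 < g i) -> \sum_i g i = 1 -> gorder g p pi ->
  0 <= x <= 1 -> (forall i, 0 <= t i <= 1) -> \sum_i t i * g i = x ->
  \sum_i t i * p i <= curve g p pi x.
Proof.
move=> hg hs hpi /andP[hx0 hx1] ht htg.
have hg0 i : 0 <= g i by apply/ltW.
pose c (i : 'I_n.+1) := p (pi i) / g (pi i).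
pose u (i : 'I_n.+1) := Num.min (Num.max (x - xpt g pi i) 0) (g (pi i)).
pose w i := t (pi i) * g (pi i) - u i.
have hW k : (k <= n.+1)%N -> \sum_(i < n.+1 | (i < k)%N) w i <= 0.
  move=> hk; rewrite /w /u sumrB sumU // subr_le0 le_min; apply/andP; split.
  - rewrite -htg -(sum_perm pi (fun i => t i * g i)) [leLHS]big_mkcond /=.
    apply: ler_sum => i _; case: ifP => // _.
    by have /andP[h1 _] := ht (pi i); apply: mulr_ge0.
  - rewrite /xpt; apply: ler_sum => i _.
    by have /andP[_ h1] := ht (pi i); apply: ler_piMl.
have hQ k : (k <= n.+1)%N -> forall y, (forall i : 'I_n.+1, (i < k)%N -> y <= c i) ->
   \sum_(i < n.+1 | (i < k)%N) c i * w i <= y * \sum_(i < n.+1 | (i < k)%N) w i.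
  elim: k => [|k IH] hk y hy; first by rewrite !sum_lt0 mulr0.
  rewrite !(sum_ltS hk).
  have h1 := IH (ltnW hk) (c (Ordinal hk)) (fun i hi => hpi i (Ordinal hk) (ltnW hi)).
  have h2 : y <= c (Ordinal hk) := hy (Ordinal hk) (ltnSn k).
  have h3 := hW k.+1 hk; rewrite (sum_ltS hk) in h3.
  nra.
have := hQ n.+1 (leqnn _) (c ord_max) (fun i _ => hpi i ord_max (leq_ord i)).
have -> : \sum_(i < n.+1 | (i < n.+1)%N) w i = 0.
  rewrite /w /u sumrB sumU // xptd hs sum_ltd (sum_perm pi (fun i => t i * g i)) htg.
  by rewrite min_l // subrr.
have -> : \sum_(i < n.+1 | (i < n.+1)%N) c i * w i = \sum_i t i * p i - curve g p pi x.
  rewrite sum_ltd /w /c /u /curve -(sum_perm pi (fun i => t i * p i)) -sumrB.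
  apply: eq_bigr => i _; field.
  by rewrite gt_eqF.
rewrite mulr0; lra.
Qed.

Definition gpres g (M : 'I_n.+1 -> 'I_n.+1 -> R) :=
  [/\ forall i j, 0 <= M i j, forall j, \sum_i M i j = 1 &
      forall i, \sum_j M i j * g j = g i].

Lemma gpres_maj g p M : (forall i, 0 < g i) -> \sum_i g i = 1 -> gpres g M ->
  thermomaj g p (fun i => \sum_j M i j * p j).
Proof.
move=> hg hs [hM0 hM1 hMg] pi sigma hpi _ x hx.
have [t [ht [htg ->]]] := curve_rep g (fun i => \sum_j M i j * p j) sigma x hg hs hx.
pose s j := \sum_i t i * M i j.
have -> : \sum_i t i * (\sum_j M i j * p j) = \sum_j s j * p j.
  rewrite /s; under eq_bigr => i _ do rewrite mulr_sumr.
  rewrite exchange_big /=; apply: eq_bigr => j _; rewrite mulr_suml.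
  by apply: eq_bigr => i _; rewrite mulrA.
apply: (@greedy g p pi x s hg hs hpi hx).
- move=> j; apply/andP; split.
    by apply: sumr_ge0 => i _; have /andP[h1 _] := ht i; apply: mulr_ge0.
  rewrite -(hM1 j); apply: ler_sum => i _.
  by have /andP[_ h1] := ht i; apply: ler_piMl.
- rewrite -htg /s; under eq_bigr => j _ do rewrite mulr_suml.
  rewrite exchange_big /=; apply: eq_bigr => i _; rewrite -hMg mulr_sumr.
  by apply: eq_bigr => j _; rewrite mulrA.
Qed.

Lemma gpres_prob g p M : gpres g M -> prob_dist p ->
  prob_dist (fun i => \sum_j M i j * p j).
Proof.
move=> [hM0 hM1 _] [hp0 hp1]; split.
  by move=> i; apply: sumr_ge0 => j _; apply: mulr_ge0.
rewrite exchange_big /= -hp1; apply: eq_bigr => j _.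
by rewrite -mulr_suml hM1 mul1r.
Qed.

Lemma sum_at (a : 'I_n.+1) (F : 'I_n.+1 -> R) :
  (forall j, j != a -> F j = 0) -> \sum_j F j = F a.
Proof. by move=> h; rewrite (bigD1 a) //= big1 ?addr0. Qed.

Lemma sum_at2 (a b : 'I_n.+1) (F : 'I_n.+1 -> R) : a != b ->
  (forall j, j != a -> j != b -> F j = 0) -> \sum_j F j = F a + F b.
Proof.
move=> hab h; rewrite (bigD1 a) //= (bigD1 b) 1?eq_sym //= big1 ?addr0 ?addrA //.
by move=> j /andP[h1 h2]; apply: h.
Qed.

Lemma sum_but (a : 'I_n.+1) (F : 'I_n.+1 -> R) :
  \sum_(j | j != a) F j = \sum_j F j - F a.
Proof. by rewrite [X in _ = X - _](bigD1 a) //= addrC addrK. Qed.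

Lemma pair_le (a b : 'I_n.+1) (F : 'I_n.+1 -> R) : a != b ->
  (forall j, 0 <= F j) -> F a + F b <= \sum_j F j.
Proof.
move=> hab h; rewrite (bigD1 a) //= (bigD1 b) 1?eq_sym //= addrA lerDl.
by apply: sumr_ge0 => j _; apply: h.
Qed.

Lemma gibbs_pos b (E : 'I_n.+1 -> R) i : 0 < gibbs b E i.
Proof.
rewrite /gibbs divr_gt0 ?expR_gt0 //.
rewrite (bigD1 ord0) //=; apply: ltr_wpDr; last exact: expR_gt0.
by apply: sumr_ge0 => j _; apply/ltW/expR_gt0.
Qed.

Lemma gibbs_sum b (E : 'I_n.+1 -> R) : \sum_i gibbs b E i = 1.
Proof.
rewrite /gibbs -mulr_suml divff // gt_eqF //.
rewrite (bigD1 ord0) //=; apply: ltr_wpDr; last exact: expR_gt0.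
by apply: sumr_ge0 => j _; apply/ltW/expR_gt0.
Qed.

Lemma gibbs_mono b (E : 'I_n.+1 -> R) i j : 0 <= b -> E i <= E j -> gibbs b E j <= gibbs b E i.
Proof.
move=> hb hE; rewrite /gibbs ler_pM2r ?invr_gt0.
  by rewrite ler_expR lerN2 ler_wpM2l.
rewrite (bigD1 ord0) //=; apply: ltr_wpDr; last exact: expR_gt0.
by apply: sumr_ge0 => k _; apply/ltW/expR_gt0.
Qed.

End Core.

(* dimension d = n.+2 (i.e. d >= 2); index 1 is ord0, index d is ord_max *)
Theorem lemma3 (R : realType) (n : nat) (E : 'I_n.+2 -> R) (alpha beta : R)
  (hE : forall i j : 'I_n.+2, (i <= j)%N -> E i <= E j)
  (hab : beta < alpha) (hb : 0 <= beta)
  (p q : 'I_n.+2 -> R) (hp : prob_dist p) (hq : prob_dist q) :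
  let g := gibbs alpha E in
  let G := gibbs beta E in
  let den := G ord0 * (1 - g ord_max) - G ord_max * (1 - g ord0) in
  let tg1 := G ord0 * (g ord0 - g ord_max) / den in
  let tGd := G ord_max * (g ord0 - g ord_max) / den in
  G ord_max <= p ord_max <= tGd ->
  g ord0 <= q ord0 <= tg1 ->
  exists p' p'' q' q'' : 'I_n.+2 -> R,
    [/\ prob_dist p', prob_dist p'', prob_dist q' & prob_dist q''] /\
    [/\ thermomaj g p p', thermomaj G p' p'',
        thermomaj G q q' & thermomaj g q' q''] /\
    p'' ord_max = (1 - g ord0) * G ord_max / ((1 - g ord_max) * G ord0) * p ord_max
                  + (g ord0 - g ord_max) * G ord_max / ((1 - g ord_max) * G ord0) /\
    q'' ord0 = (1 - g ord0) * G ord_max / ((1 - g ord_max) * G ord0) * q ord0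
               + (g ord0 - g ord_max) / (1 - g ord_max) /\
    p ord_max <= p'' ord_max <= tGd /\
    q ord0 <= q'' ord0 <= tg1.
Proof.
move=> g G den tg1 tGd /andP[hp1 hp2] /andP[hq1 hq2].
set o : 'I_n.+2 := ord0; set m : 'I_n.+2 := ord_max.
have hom : o != m by [].
have eden : den = G o * (1 - g m) - G m * (1 - g o) by [].
have etg : tg1 = G o * (g o - g m) / den by [].
have etG : tGd = G m * (g o - g m) / den by [].
clearbody tGd tg1 den.
have hmo : m != o by [].
have gpos i : 0 < g i := gibbs_pos _ _ _.
have Gpos i : 0 < G i := gibbs_pos _ _ _.
have gs : \sum_i g i = 1 := gibbs_sum _ _.
have Gs : \sum_i G i = 1 := gibbs_sum _ _.
have ha : 0 <= alpha by lra.
have gom : g m <= g o by apply: gibbs_mono => //; apply: hE.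
have Gom : G m <= G o by apply: gibbs_mono => //; apply: hE.
clearbody g G.
have gpair : g o + g m <= 1 by rewrite -gs; apply: pair_le => // i; apply/ltW.
have Gpair : G o + G m <= 1 by rewrite -Gs; apply: pair_le => // i; apply/ltW.
have gm0 := gpos m; have go0 := gpos o; have Gm0 := Gpos m; have Go0 := Gpos o.
have h1go : 0 < 1 - g o by lra.
have h1gm : 0 < 1 - g m by lra.
have nz1 : 1 - g o != 0 by rewrite gt_eqF.
have nz2 : 1 - g m != 0 by rewrite gt_eqF.
have nz3 : G o != 0 by rewrite gt_eqF.
pose c := (1 - g o) / (1 - g m).
pose r := G m / G o.
have c0 : 0 <= c by rewrite divr_ge0 //; lra.
have c1 : c <= 1 by rewrite ler_pdivrMr // mul1r; lra.
have r0 : 0 <= r by rewrite divr_ge0 //; lra.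
have r1 : r <= 1 by rewrite ler_pdivrMr // mul1r.
pose k1 := c / (1 - g o).
have k10 : 0 <= k1 by rewrite divr_ge0 //; lra.
pose M1 := fun i j : 'I_n.+2 => if j == m then (if i == o then 1 else 0)
                                else (if i == o then 1 - c else k1 * g i).
pose M2 := fun i j : 'I_n.+2 => if j == o then (if i == o then 1 - r else if i == m then r else 0)
                                else if j == m then (if i == o then 1 else 0)
                                else (if i == j then 1 else 0).
have hM1o f : \sum_j M1 o j * f j = f m + (1 - c) * (\sum_j f j - f m).
  rewrite (bigD1 m) //= /M1 !eqxx mul1r.
  rewrite (eq_bigr (fun j => (1 - c) * f j)); last by move=> j /negbTE ->.
  by rewrite -mulr_sumr sum_but.
have hM2m f : \sum_j M2 m j * f j = r * f o.
  rewrite (sum_at o) /M2 ?eqxx ?(negbTE hmo) ?eqxx //.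
  move=> j h1; rewrite (negbTE h1); case: ifP => [_|h2]; first by rewrite mul0r.
  by rewrite eq_sym h2 mul0r.
have hM1 : gpres g M1.
  split.
  - move=> i j; rewrite /M1; do 2 case: ifP => _ //; try lra.
    by apply: mulr_ge0 => //; apply/ltW.
  - move=> j; case: (eqVneq j m) => [->|hjm]; rewrite /M1.
      by rewrite eqxx (sum_at o) ?eqxx // => i /negbTE ->.
    rewrite (negbTE hjm) (bigD1 o) //= ?eqxx.
    rewrite (eq_bigr (fun i => k1 * g i)); last by move=> i /negbTE ->.
    rewrite -mulr_sumr sum_but gs /k1 /c; field.
    by rewrite ?nz1 ?nz2 ?nz3.
  - move=> i; rewrite (bigD1 m) //= /M1 eqxx.
    rewrite (eq_bigr (fun j => (if i == o then 1 - c else k1 * g i) * g j));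
      last by move=> j /negbTE ->.
    rewrite -mulr_sumr sum_but gs.
    case: (eqVneq i o) => [->|hio]; rewrite /k1 /c; field;
      by rewrite ?nz1 ?nz2 ?nz3.
have hM2 : gpres G M2.
  split.
  - move=> i j; rewrite /M2; repeat (case: ifP => _); lra.
  - move=> j; case: (eqVneq j o) => [->|hjo]; [|case: (eqVneq j m) => [->|hjm]]; rewrite /M2.
    + rewrite (sum_at2 _ _ _ hom) ?eqxx ?(negbTE hmo) ?eqxx; first by rewrite subrK.
      by move=> i h1 h2; rewrite (negbTE h1) (negbTE h2).
    + by rewrite (negbTE hmo) (sum_at o) ?eqxx // => i /negbTE ->.
    + by rewrite (negbTE hjo) (negbTE hjm) (sum_at j) ?eqxx // => i /negbTE ->.
  - move=> i; case: (eqVneq i m) => [->|him]; first by rewrite hM2m /r; field; rewrite ?nz1 ?nz2 ?nz3.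
    case: (eqVneq i o) => [->|hio]; rewrite /M2.
      rewrite (sum_at2 _ _ _ hom) ?eqxx ?(negbTE hmo) ?eqxx; first by rewrite /r; field; rewrite ?nz1 ?nz2 ?nz3.
      by move=> j h1 h2; rewrite (negbTE h1) (negbTE h2) eq_sym (negbTE h1) mul0r.
    rewrite (sum_at i) ?eqxx ?(negbTE hio) ?(negbTE him) ?mul1r //.
    move=> j hji; case: ifP => _; [|case: ifP => _];
      by rewrite ?(negbTE hio) ?(negbTE him) ?(eq_sym i j) ?(negbTE hji) mul0r.
pose p' := fun i => \sum_j M1 i j * p j.
pose p'' := fun i => \sum_j M2 i j * p' j.
pose q' := fun i => \sum_j M2 i j * q j.
pose q'' := fun i => \sum_j M1 i j * q' j.
have hp' := gpres_prob _ _ _ hM1 hp.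
have hq' := gpres_prob _ _ _ hM2 hq.
exists p', p'', q', q''.
split; first by split => //; [exact: (gpres_prob _ _ _ hM2 hp') | exact: (gpres_prob _ _ _ hM1 hq')].
split; first by split; apply: gpres_maj.
have ep : p'' m = G m * ((1 - g o) * p m + (g o - g m)) / ((1 - g m) * G o).
  rewrite /p'' hM2m /p' hM1o hp.2 /r /c; field.
  by rewrite ?nz1 ?nz2 ?nz3.
have eqq : q'' o = ((1 - g o) * G m * q o + (g o - g m) * G o) / ((1 - g m) * G o).
  rewrite /q'' hM1o hq'.2 /q' hM2m /r /c; field.
  by rewrite ?nz1 ?nz2 ?nz3.
have hden0 : 0 <= den by rewrite eden; nra.
have hD : 0 < (1 - g m) * G o by apply: mulr_gt0.
split.
  rewrite ep; field; by rewrite ?nz1 ?nz2 ?nz3.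
split.
  rewrite eqq; field; by rewrite ?nz1 ?nz2 ?nz3.
split.
  have hden : 0 < den.
    rewrite lt0r hden0 andbT; apply/eqP => h0; move: (le_trans hp1 hp2).
    by rewrite etG h0 invr0 mulr0; lra.
  move: hp2; rewrite etG ler_pdivlMr // eden => hp2.
  have h := ler_wpM2l (_ : 0 <= G m * (1 - g o)) hp2.
  have h' : 0 <= G m * (1 - g o) by apply: mulr_ge0; lra.
  have A : p m * ((1 - g m) * G o) <= G m * ((1 - g o) * p m + (g o - g m)) by lra.
  have B : G m * ((1 - g o) * p m + (g o - g m)) * den <= G m * (g o - g m) * ((1 - g m) * G o).
    rewrite eden; move: (h h'); lra.
  by rewrite ep ler_pdivlMr // A /= -eden ler_pdivrMr // mulrAC ler_pdivlMr.
have hden : 0 < den.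
  rewrite lt0r hden0 andbT; apply/eqP => h0; move: (le_trans hq1 hq2).
  by rewrite etg h0 invr0 mulr0; lra.
move: hq2; rewrite etg ler_pdivlMr // eden => hq2.
have h := ler_wpM2l (_ : 0 <= G m * (1 - g o)) hq2.
have h' : 0 <= G m * (1 - g o) by apply: mulr_ge0; lra.
have A : q o * ((1 - g m) * G o) <= (1 - g o) * G m * q o + (g o - g m) * G o by lra.
have B : ((1 - g o) * G m * q o + (g o - g m) * G o) * den <= G o * (g o - g m) * ((1 - g m) * G o).
  rewrite eden; move: (h h'); lra.
rewrite eqq; apply/andP; split; first by rewrite ler_pdivlMr.
by rewrite -eden ler_pdivrMr // [leRHS]mulrAC ler_pdivlMr.
Qed.
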